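(* For every path $\omega\in\Omega$: $I_\textnormal{wCH}(\omega)\subseteq I_\textnormal{CH}(\omega)\subseteq I_\textnormal{C}(\omega)$, $I_\textnormal{wCH}(\omega)\subseteq I_\textnormal{S}(\omega)\subseteq I_\textnormal{C}(\omega)$, and $I_\textnormal{C}(\omega)\subseteq I_\textnormal{wML}(\omega)\subseteq I_\textnormal{ML}(\omega)$.
   Context: $\mathcal{X}=\{0,1\}$; $\Omega=\mathcal{X}^{\mathbb{N}}$ (paths); $\mathbb{S}=\bigcup_{n\ge0}\mathcal X^n$ (situations), $\square$ empty string, $|s|$ length, $\omega_{1:n}=(\omega_1,\dots,\omega_n)$, $\omega_{1:0}=\square$. $\mathcal I$: nonempty closed intervals $I\subseteq[0,1]$ (interval forecasts). For $f:\mathcal X\to\mathbb R$, $\overline E_I(f)=\max_{p\in I}[pf(1)+(1-p)f(0)]$. A test supermartingale for $I$ is $T:\mathbb S\to\mathbb R_{\ge0}$ with $T(\square)=1$ and $\overline E_I(T(s\,\cdot)-T(s))\le0$ for all $s$. Real maps on countable effectively encoded sets are computable if recursively approximable to within $2^{-n}$ by rationals, and lower semicomputable if they are limits of recursive non-decreasing rational sequences. A multiplier process $D$ maps situations to gambles and generates $D^{\circledcirc}(x_1,\dots,x_n)=\prod_{k=0}^{n-1}D(x_{1:k})(x_{k+1})$; it is lower semicomputable if $(s,x)\mapsto D(s)(x)$ is. For a path $\omega$ and $I\in\mathcal I$: ML-random if no lower semicomputable test supermartingale $T$ for $I$ has $\limsup_nT(\omega_{1:n})=\infty$; wML-random if no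 test supermartingale for $I$ of the form $D^{\circledcirc}$, $D$ lower semicomputable, has this; C-random if no computable test supermartingale for $I$ has this; S-random if there is no computable test supermartingale $T$ for $I$ with a computable non-decreasing unbounded $\tau:\mathbb N_0\to\mathbb R_{\ge0}$ satisfying $\limsup_n[T(\omega_{1:n})-\tau(n)]\ge0$; CH-random (resp. wCH-random) if for every recursive (resp. recursive temporal, i.e. depending only on $|s|$) $S:\mathbb S\to\{0,1\}$ with $\sum_{k=0}^{n-1}S(\omega_{1:k})\to\infty$, the relative frequencies $\frac{\sum_{k<n}S(\omega_{1:k})\omega_{k+1}}{\sum_{k<n}S(\omega_{1:k})}$ have liminf $\ge\min I$ and limsup $\le\max I$. $\mathcal I_\textnormal{R}(\omega)=\{I\in\mathcal I:\omega\text{ R-random for }I\}$, $I_\textnormal{R}(\omega)=\bigcap_{I\in\mathcal I_\textnormal{R}(\omega)}I$. *)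

(* Defs.v *)
From Stdlib Require Import Reals Lra List.
Import ListNotations.
Open Scope R_scope.

Inductive prog : Type :=
| PZero : prog
| PSucc : prog
| PProj : nat -> prog                   (* i-th argument (0-based) *)
| PComp : prog -> list prog -> prog
| PPrec : prog -> prog -> prog          (* primitive recursion on the first argument *)
| PMu   : prog -> prog.                 (* unbounded minimisation on the first argument *)

Inductive eval : prog -> list nat -> nat -> Prop :=
| eZero args : eval PZero args 0
| eSucc args : eval PSucc args (S (hd 0%nat args))
| eProj i args : eval (PProj i) args (nth i args 0%nat)
| eComp f gs args vs v :
    Forall2 (fun g w => eval g args w) gs vs -> eval f vs v ->
    eval (PComp f gs) args v
| ePrec0 f g args v : eval f args v -> eval (PPrec f g) (0%nat :: args) v
| ePrecS f g n args r v :
    eval (PPrec f g) (n :: args) r -> eval g (n :: r :: args) v ->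
    eval (PPrec f g) (S n :: args) v
| eMu f args n :
    eval f (n :: args) 0%nat ->
    (forall m, (m < n)%nat -> exists k, eval f (m :: args) (S k)) ->
    eval (PMu f) args n.

(* X = {0,1} is bool (true = 1); a path omega has omega_{k+1} = omega k. *)
Definition path := nat -> bool.
(* situations: finite binary strings, s . x = s ++ [x] *)
Definition sit := list bool.

Definition b2n (b : bool) : nat := if b then 1%nat else 0%nat.
Definition b2R (b : bool) : R := if b then 1 else 0.

Definition prefix (w : path) (n : nat) : sit := map w (seq 0 n).

(* injective code of a binary string: binary numeral with a leading 1 *)
Definition code_sit (s : sit) : nat :=
  fold_left (fun acc b => (2 * acc + b2n b)%nat) s 1%nat.

Definition Qval (p m d : nat) : R := (INR p - INR m) / INR (S d).

Definition rat_rec (P M D : prog) (args : list nat) (q : R) : Prop :=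
  exists p m d, eval P args p /\ eval M args m /\ eval D args d /\ q = Qval p m d.

Definition computable {A : Type} (code : A -> list nat) (f : A -> R) : Prop :=
  exists (P M D : prog) (q : A -> nat -> R),
    (forall a n, rat_rec P M D (code a ++ [n]) (q a n)) /\
    (forall a n, Rabs (f a - q a n) <= / 2 ^ n).

Definition lower_semicomputable {A : Type} (code : A -> list nat) (f : A -> R)
  : Prop :=
  exists (P M D : prog) (q : A -> nat -> R),
    (forall a n, rat_rec P M D (code a ++ [n]) (q a n)) /\
    (forall a n, q a n <= q a (S n)) /\
    (forall a, Un_cv (q a) (f a)).

Definition code_S (s : sit) : list nat := [code_sit s].
Definition code_SX (sx : sit * bool) : list nat := [code_sit (fst sx); b2n (snd sx)].
Definition code_N (n : nat) : list nat := [n].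

Definition recursive_sel (Sel : sit -> bool) : Prop :=
  exists P : prog, forall s, eval P (code_S s) (b2n (Sel s)).

Definition temporal (Sel : sit -> bool) : Prop :=
  forall s t, length s = length t -> Sel s = Sel t.

Record ivl := mkIvl {
  lo : R; hi : R;
  lo_ge0 : 0 <= lo; lo_le_hi : lo <= hi; hi_le1 : hi <= 1 }.

(* \overline{E}_I(f) <= 0, i.e. max_{p in I} [p f(1) + (1-p) f(0)] <= 0 *)
Definition upper_exp_le0 (I : ivl) (f : bool -> R) : Prop :=
  forall p, lo I <= p <= hi I -> p * f true + (1 - p) * f false <= 0.

Definition test_supermartingale (I : ivl) (T : sit -> R) : Prop :=
  (forall s, 0 <= T s) /\ T [] = 1 /\
  (forall s, upper_exp_le0 I (fun x => T (s ++ [x]) - T s)).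

Fixpoint mult_aux (D : sit -> bool -> R) (pre s : sit) : R :=
  match s with
  | [] => 1
  | x :: t => D pre x * mult_aux D (pre ++ [x]) t
  end.
Definition mult_proc (D : sit -> bool -> R) (s : sit) : R := mult_aux D [] s.

Definition limsup_infty (T : sit -> R) (w : path) : Prop :=
  forall (M : R) (N : nat), exists n, (N <= n)%nat /\ M < T (prefix w n).

Definition ML_random (w : path) (I : ivl) : Prop :=
  ~ exists T, test_supermartingale I T /\ lower_semicomputable code_S T /\
              limsup_infty T w.

Definition wML_random (w : path) (I : ivl) : Prop :=
  ~ exists D : sit -> bool -> R,
      lower_semicomputable code_SX (fun sx => D (fst sx) (snd sx)) /\
      test_supermartingale I (mult_proc D) /\ limsup_infty (mult_proc D) w.

Definition C_random (w : path) (I : ivl) : Prop :=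
  ~ exists T, test_supermartingale I T /\ computable code_S T /\
              limsup_infty T w.

Definition S_random (w : path) (I : ivl) : Prop :=
  ~ exists (T : sit -> R) (tau : nat -> R),
      test_supermartingale I T /\ computable code_S T /\
      computable code_N tau /\
      (forall n, 0 <= tau n) /\ (forall n, tau n <= tau (S n)) /\
      (forall M, exists n, M < tau n) /\
      (forall (eps : R) (N : nat), 0 < eps ->
         exists n, (N <= n)%nat /\ - eps < T (prefix w n) - tau n).

Fixpoint sel_count (Sel : sit -> bool) (w : path) (n : nat) : nat :=
  match n with
  | O => O
  | Datatypes.S k => (sel_count Sel w k + b2n (Sel (prefix w k)))%nat
  end.
Fixpoint sel_hits (Sel : sit -> bool) (w : path) (n : nat) : nat :=
  match n with
  | O => O
  | Datatypes.S k => (sel_hits Sel w k + b2n (Sel (prefix w k) && w k))%nat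
  end.
Definition sel_freq (Sel : sit -> bool) (w : path) (n : nat) : R :=
  INR (sel_hits Sel w n) / INR (sel_count Sel w n).

Definition freq_condition (Sel : sit -> bool) (w : path) (I : ivl) : Prop :=
  (forall M : nat, exists N, forall n, (N <= n)%nat -> (M < sel_count Sel w n)%nat) ->
  (forall eps, 0 < eps -> exists N, forall n, (N <= n)%nat ->
       lo I - eps < sel_freq Sel w n) /\
  (forall eps, 0 < eps -> exists N, forall n, (N <= n)%nat ->
       sel_freq Sel w n < hi I + eps).

Definition CH_random (w : path) (I : ivl) : Prop :=
  forall Sel, recursive_sel Sel -> freq_condition Sel w I.

Definition wCH_random (w : path) (I : ivl) : Prop :=
  forall Sel, recursive_sel Sel -> temporal Sel -> freq_condition Sel w I.

Definition I_R (rand : path -> ivl -> Prop) (w : path) (x : R) : Prop :=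
  0 <= x <= 1 /\ forall I, rand w I -> lo I <= x <= hi I.

Definition subsetR (A B : R -> Prop) : Prop := forall x, A x -> B x.

(* Main.v *)
Require Import Defs.
From Stdlib Require Import Reals Lra Lia List Arith ZArith Classical ClassicalEpsilon.
Import ListNotations.

Lemma ev_c1 F G a v1 v : eval G a v1 -> eval F [v1] v -> eval (PComp F [G]) a v.
Proof. intros. econstructor; eauto. Qed.
Lemma ev_c2 F G1 G2 a v1 v2 v : eval G1 a v1 -> eval G2 a v2 -> eval F [v1;v2] v ->
  eval (PComp F [G1;G2]) a v.
Proof. intros. econstructor; eauto. Qed.
Lemma ev_c3 F G1 G2 G3 a v1 v2 v3 v : eval G1 a v1 -> eval G2 a v2 -> eval G3 a v3 ->
  eval F [v1;v2;v3] v -> eval (PComp F [G1;G2;G3]) a v.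
Proof. intros. econstructor; eauto. Qed.

Lemma ev_proj i a v : nth i a 0%nat = v -> eval (PProj i) a v.
Proof. intros <-. constructor. Qed.

Definition ADD := PPrec (PProj 0) (PComp PSucc [PProj 1]).
Lemma ev_add a b rest : eval ADD (a :: b :: rest) (a + b).
Proof.
  induction a.
  - constructor. apply ev_proj. reflexivity.
  - econstructor; [exact IHa|]. eapply ev_c1. apply ev_proj. reflexivity.
    constructor.
Qed.

Definition MUL := PPrec PZero (PComp ADD [PProj 1; PProj 2]).
Lemma ev_mul a b rest : eval MUL (a :: b :: rest) (a * b).
Proof.
  induction a.
  - constructor. constructor.
  - econstructor; [exact IHa|]. eapply ev_c2; try (apply ev_proj; reflexivity).
    simpl. replace (b + a * b)%nat with (a * b + b)%nat by lia. apply ev_add.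
Qed.

Definition PRED := PPrec PZero (PProj 0).
Lemma ev_pred a rest : eval PRED (a :: rest) (pred a).
Proof. induction a. - constructor. constructor. - econstructor. exact IHa.
  apply ev_proj. reflexivity. Qed.

Definition SUBr := PPrec (PProj 0) (PComp PRED [PProj 1]).
Lemma ev_subr b a rest : eval SUBr (b :: a :: rest) (a - b).
Proof.
  induction b.
  - constructor. apply ev_proj. simpl. lia.
  - econstructor; [exact IHb|]. eapply ev_c1. apply ev_proj; reflexivity.
    replace (a - S b)%nat with (pred (a - b)) by lia. apply ev_pred.
Qed.
Definition SUB := PComp SUBr [PProj 1; PProj 0].
Lemma ev_sub a b rest : eval SUB (a :: b :: rest) (a - b).
Proof. eapply ev_c2; try (apply ev_proj; reflexivity). apply ev_subr. Qed.

Fixpoint CONST (k : nat) : prog := match k with O => PZero | S k' => PComp PSucc [CONST k'] end.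
Lemma ev_const k a : eval (CONST k) a k.
Proof. induction k. constructor. simpl. eapply ev_c1. exact IHk. constructor. Qed.

Fixpoint par n := match n with O => O | S k => (1 - par k)%nat end.
Fixpoint hlf n := match n with O => O | S k => (hlf k + par k)%nat end.
Lemma par_le1 n : (par n <= 1)%nat.
Proof. destruct n. simpl; lia. change (par (S n)) with (1 - par n)%nat. lia. Qed.
Lemma par_hlf c b : (b <= 1)%nat -> par (2*c+b) = b /\ hlf (2*c+b) = c.
Proof.
  intros Hb. induction c.
  - destruct b as [|[|]]; [split; reflexivity|split; reflexivity|lia].
  - replace (2 * S c + b)%nat with (S (S (2*c+b))) by lia.
    change (par (S (S (2*c+b)))) with (1 - (1 - par (2*c+b)))%nat.
    change (hlf (S (S (2*c+b)))) with (hlf (2*c+b) + par (2*c+b) + (1 - par (2*c+b)))%nat.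
    destruct IHc as [H1 H2]. rewrite H1, H2. lia.
Qed.

Definition ODD := PPrec PZero (PComp SUB [CONST 1; PProj 1]).
Lemma ev_odd n rest : eval ODD (n :: rest) (par n).
Proof.
  induction n. constructor; constructor.
  econstructor; [exact IHn|]. eapply ev_c2. apply ev_const. apply ev_proj; reflexivity.
  apply ev_sub.
Qed.
Definition HALF := PPrec PZero (PComp ADD [PProj 1; PComp ODD [PProj 0]]).
Lemma ev_half n rest : eval HALF (n :: rest) (hlf n).
Proof.
  induction n. constructor; constructor.
  econstructor; [exact IHn|]. eapply ev_c2. apply ev_proj; reflexivity.
  eapply ev_c1. apply ev_proj; reflexivity. apply ev_odd. apply ev_add.
Qed.

Fixpoint hit (j c : nat) : nat := match j with O => c | S j' => hlf (hit j' c) end.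
Definition HIT := PPrec (PProj 0) (PComp HALF [PProj 1]).
Lemma ev_hit j c rest : eval HIT (j :: c :: rest) (hit j c).
Proof.
  induction j. constructor. apply ev_proj; reflexivity.
  econstructor; [exact IHj|]. eapply ev_c1. apply ev_proj; reflexivity. apply ev_half.
Qed.

Fixpoint pow2 (n : nat) : nat := match n with O => 1%nat | S k => (pow2 k + pow2 k)%nat end.
Definition POW2 := PPrec (CONST 1) (PComp ADD [PProj 1; PProj 1]).
Lemma ev_pow2 n rest : eval POW2 (n :: rest) (pow2 n).
Proof.
  induction n. constructor. apply ev_const.
  econstructor; [exact IHn|]. eapply ev_c2; try (apply ev_proj; reflexivity). apply ev_add.
Qed.

Lemma cs_app s x : code_sit (s ++ [x]) = (2 * code_sit s + b2n x)%nat.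
Proof. unfold code_sit. rewrite fold_left_app. simpl. lia. Qed.

Lemma cs_nil : code_sit [] = 1%nat.
Proof. reflexivity. Qed.

Lemma cs_pos s : (1 <= code_sit s)%nat.
Proof. induction s using rev_ind. rewrite cs_nil. lia. rewrite cs_app. lia. Qed.

Lemma b2n_le1 x : (b2n x <= 1)%nat.
Proof. destruct x; simpl; lia. Qed.

Lemma hit_S j c : hit (S j) c = hit j (hlf c).
Proof. induction j. reflexivity. simpl in *. now rewrite IHj. Qed.

Lemma hit_small j c : (c <= 1)%nat -> (hit j c <= 1)%nat.
Proof.
  intros Hc. induction j. simpl; lia.
  simpl. destruct (hit j c) as [|[|]] eqn:E; simpl; lia.
Qed.

Lemma hit_len s j : (length s <= j)%nat -> (hit j (code_sit s) <= 1)%nat.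
Proof.
  revert j. induction s using rev_ind; intros j Hj.
  - apply hit_small. rewrite cs_nil. lia.
  - rewrite length_app in Hj. simpl in Hj. destruct j. lia.
    rewrite hit_S, cs_app. destruct (par_hlf (code_sit s) (b2n x) (b2n_le1 x)) as [_ ->].
    apply IHs. lia.
Qed.

Section G.
Variable numf : nat -> nat -> nat -> nat.
Definition condf (j c : nat) : nat := (1 - (1 - pred (hit j c)))%nat.
Definition argf (j c : nat) : nat := (hit (S j) c + (1 - hit (S j) c))%nat.
Definition termf (j c e : nat) : nat :=
  (condf j c * numf (argf j c) (par (hit j c)) e + (1 - condf j c))%nat.
Fixpoint gprod (B c e : nat) : nat :=
  match B with O => 1%nat | S B' => (gprod B' c e * termf B' c e)%nat end.

Lemma termf_small j c e : (hit j c <= 1)%nat -> termf j c e = 1%nat.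
Proof. intros H. unfold termf, condf. replace (pred (hit j c)) with 0%nat by lia. simpl. lia. Qed.

Lemma termf_S j c e : termf (S j) c e = termf j (hlf c) e.
Proof. unfold termf, condf, argf. rewrite !(hit_S _ c). reflexivity. Qed.

Lemma termf_0 c b e : (1 <= c)%nat -> (b <= 1)%nat -> termf 0 (2*c+b) e = numf c b e.
Proof.
  intros Hc Hb. unfold termf, condf, argf. cbn [hit].
  destruct (par_hlf c b Hb) as [-> ->].
  replace (1 - (1 - pred (2*c+b)))%nat with 1%nat by lia.
  replace (c + (1 - c))%nat with c by lia. lia.
Qed.

Lemma gprod_S B c e : gprod (S B) c e = (termf 0 c e * gprod B (hlf c) e)%nat.
Proof.
  induction B. simpl. lia.
  change (gprod (S (S B)) c e) with (gprod (S B) c e * termf (S B) c e)%nat.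
  rewrite IHB, termf_S. simpl. lia.
Qed.

Lemma gprod_one B c e : (forall j, hit j c <= 1)%nat -> gprod B c e = 1%nat.
Proof. intros H. induction B. reflexivity. simpl. rewrite IHB, termf_small; auto. Qed.

Fixpoint nprod (f : sit -> bool -> nat) (pre s : sit) : nat :=
  match s with [] => 1%nat | x :: t => (f pre x * nprod f (pre ++ [x]) t)%nat end.

Lemma nprod_app f pre s x : nprod f pre (s ++ [x]) = (nprod f pre s * f (pre ++ s) x)%nat.
Proof.
  revert pre. induction s; intros pre; simpl.
  - rewrite app_nil_r. lia.
  - rewrite IHs. rewrite <- app_assoc. simpl. lia.
Qed.

Lemma gprod_nprod s B e : (length s <= B)%nat ->
  gprod B (code_sit s) e = nprod (fun pre x => numf (code_sit pre) (b2n x) e) [] s.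
Proof.
  revert B. induction s using rev_ind; intros B HB.
  - simpl. apply gprod_one. intros j. apply hit_small. rewrite cs_nil; lia.
  - rewrite length_app in HB. simpl in HB. destruct B. lia.
    rewrite gprod_S, cs_app, termf_0 by (apply cs_pos || apply b2n_le1).
    destruct (par_hlf (code_sit s) (b2n x) (b2n_le1 x)) as [_ ->].
    rewrite IHs by lia. rewrite nprod_app. simpl. lia.
Qed.
End G.

Section GP.
Variable NUM : prog.
Definition HJ := PComp HIT [PProj 0; PProj 2].
Definition HJ1 := PComp HALF [HJ].
Definition COND := PComp SUB [CONST 1; PComp SUB [CONST 1; PComp PRED [HJ]]].
Definition ARG := PComp ADD [HJ1; PComp SUB [CONST 1; HJ1]].
Definition BIT := PComp ODD [HJ].
Definition NUMV := PComp NUM [ARG; BIT; PProj 3].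
Definition TERM := PComp ADD [PComp MUL [COND; NUMV]; PComp SUB [CONST 1; COND]].
Definition GSTEP := PComp MUL [PProj 1; TERM].
Definition GPROD := PPrec (CONST 1) GSTEP.
Definition GTOP := PComp GPROD [PProj 0; PProj 0; PProj 1].

Variable numf : nat -> nat -> nat -> nat.
Hypothesis Hnum : forall c b e, (1 <= c)%nat -> (b <= 1)%nat -> eval NUM [c; b; e] (numf c b e).

Lemma ev_term j r c e : eval TERM [j; r; c; e] (termf numf j c e).
Proof.
  assert (HHJ : eval HJ [j; r; c; e] (hit j c)).
  { eapply ev_c2; try (apply ev_proj; reflexivity). apply ev_hit. }
  assert (HHJ1 : eval HJ1 [j; r; c; e] (hit (S j) c)).
  { eapply ev_c1. exact HHJ. apply ev_half. }
  assert (HC : eval COND [j; r; c; e] (condf j c)).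
  { eapply ev_c2. apply ev_const. eapply ev_c2. apply ev_const.
    eapply ev_c1. exact HHJ. apply ev_pred. apply ev_sub. apply ev_sub. }
  unfold TERM. eapply ev_c2. eapply ev_c2. exact HC.
  - eapply ev_c3. eapply ev_c2. exact HHJ1. eapply ev_c2. apply ev_const. exact HHJ1.
    apply ev_sub. apply ev_add. eapply ev_c1. exact HHJ. apply ev_odd.
    apply ev_proj; reflexivity. apply Hnum. unfold argf. lia. apply par_le1.
  - apply ev_mul.
  - eapply ev_c2. apply ev_const. exact HC. apply ev_sub.
  - apply ev_add.
Qed.

Lemma ev_gprod B c e : eval GPROD [B; c; e] (gprod numf B c e).
Proof.
  induction B. constructor. apply ev_const.
  econstructor. exact IHB. eapply ev_c2. apply ev_proj; reflexivity. apply ev_term.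
  apply ev_mul.
Qed.

Lemma ev_gtop c e : eval GTOP [c; e] (gprod numf c c e).
Proof. eapply ev_c3; try (apply ev_proj; reflexivity). apply ev_gprod. Qed.
End GP.

Lemma len_lt_cs s : (length s < code_sit s)%nat.
Proof. induction s using rev_ind. rewrite cs_nil; simpl; lia. rewrite cs_app, length_app. simpl.
  pose proof (cs_pos s). lia. Qed.

Lemma ev_gtop_sit NUM numf (Hnum : forall c b e, (1 <= c)%nat -> (b <= 1)%nat -> eval NUM [c; b; e] (numf c b e)) s e :
  eval (GTOP NUM) [code_sit s; e] (nprod (fun pre x => numf (code_sit pre) (b2n x) e) [] s).
Proof. rewrite <- (gprod_nprod numf s (code_sit s)). apply ev_gtop; auto.
  pose proof (len_lt_cs s). lia. Qed.

Lemma hlf_par n : n = (2 * hlf n + par n)%nat.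
Proof.
  induction n. reflexivity.
  change (hlf (S n)) with (hlf n + par n)%nat. change (par (S n)) with (1 - par n)%nat.
  pose proof (par_le1 n). destruct (par n) as [|[|]] eqn:E; lia.
Qed.

Definition nb (b : nat) : bool := Nat.eqb b 1.
Lemma b2n_nb b : (b <= 1)%nat -> b2n (nb b) = b.
Proof. intros H. destruct b as [|[|]]; simpl; lia. Qed.
Lemma nb_b2n x : nb (b2n x) = x.
Proof. destruct x; reflexivity. Qed.
Lemma b2n_inj x y : b2n x = b2n y -> x = y.
Proof. destruct x, y; simpl; congruence. Qed.

Lemma cs_inj s t : code_sit s = code_sit t -> s = t.
Proof.
  revert t. induction s using rev_ind; intros t H.
  - destruct t using rev_ind. reflexivity. rewrite cs_app, cs_nil in H.
    pose proof (cs_pos t). lia.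
  - destruct t using rev_ind. rewrite cs_app, cs_nil in H. pose proof (cs_pos s). lia.
    clear IHt. rewrite !cs_app in H.
    destruct (par_hlf (code_sit s) (b2n x) (b2n_le1 x)) as [A1 A2].
    destruct (par_hlf (code_sit t) (b2n x0) (b2n_le1 x0)) as [B1 B2].
    rewrite H in A1, A2. rewrite A1 in B1. rewrite A2 in B2.
    apply b2n_inj in B1. subst. f_equal. apply IHs. auto.
Qed.

Lemma cs_surj c : (1 <= c)%nat -> exists s, code_sit s = c.
Proof.
  induction c as [c IH] using lt_wf_ind. intros Hc.
  destruct (Nat.eq_dec c 1). subst. exists []. reflexivity.
  pose proof (hlf_par c). pose proof (par_le1 c).
  destruct (IH (hlf c)) as [s Hs]. lia. lia.
  exists (s ++ [nb (par c)]). rewrite cs_app, Hs, b2n_nb by auto. lia.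
Qed.

Lemma dec_ex (c : nat) : { s : sit | (1 <= c)%nat -> code_sit s = c }.
Proof.
  apply constructive_indefinite_description.
  destruct (le_lt_dec 1 c). destruct (cs_surj c l) as [s Hs]. exists s; auto.
  exists []. intros; lia.
Qed.
Definition dec c := proj1_sig (dec_ex c).
Lemma cs_dec c : (1 <= c)%nat -> code_sit (dec c) = c.
Proof. unfold dec. destruct (dec_ex c). simpl. auto. Qed.
Lemma dec_cs s : dec (code_sit s) = s.
Proof. apply cs_inj. apply cs_dec. apply cs_pos. Qed.

Lemma mult_aux_app D pre s x : mult_aux D pre (s ++ [x]) = mult_aux D pre s * D (pre ++ s) x.
Proof.
  revert pre. induction s; intros pre; simpl.
  - rewrite app_nil_r. ring.
  - rewrite IHs, <- app_assoc. simpl. ring.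
Qed.

Lemma nprod_pos g pre s : (forall pre x, (1 <= g pre x)%nat) -> (1 <= nprod g pre s)%nat.
Proof. intros Hg. revert pre. induction s; intros; simpl. lia. specialize (Hg pre a). specialize (IHs (pre++[a])). nia. Qed.

Lemma mult_aux_nprod (f g : sit -> bool -> nat) pre s :
  (forall pre x, (1 <= g pre x)%nat) ->
  mult_aux (fun pre x => INR (f pre x) / INR (g pre x)) pre s =
  INR (nprod f pre s) / INR (nprod g pre s).
Proof.
  intros Hg. revert pre. induction s; intros pre; simpl.
  - field.
  - rewrite IHs, !mult_INR. assert (0 < INR (g pre a)) by (apply lt_0_INR; specialize (Hg pre a); lia).
    assert (0 < INR (nprod g (pre ++ [a]) s)).
    { apply lt_0_INR. pose proof (nprod_pos g (pre ++ [a]) s Hg). lia. }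
    field. split; lra.
Qed.


Lemma nprod_ext f g pre s : (forall pre x, f pre x = g pre x) -> nprod f pre s = nprod g pre s.
Proof. intros H. revert pre; induction s; intros; simpl; [reflexivity|]. rewrite H, IHs. reflexivity. Qed.

Lemma mult_aux_ext f g pre s : (forall pre x, f pre x = g pre x) -> mult_aux f pre s = mult_aux g pre s.
Proof. intros H. revert pre; induction s; intros; simpl; [reflexivity|]. rewrite H, IHs. reflexivity. Qed.

Lemma Qval_frac p d : Qval p 0 d = INR p / INR (S d).
Proof. unfold Qval. replace (INR 0) with 0 by reflexivity. rewrite Rminus_0_r. reflexivity. Qed.

Definition selD (Sel : sit -> bool) (a1 a0 : R) : sit -> bool -> R :=
  fun pre x => if Sel pre then (if x then a1 else a0) else 1.
Definition selT Sel a1 a0 := mult_proc (selD Sel a1 a0).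

Lemma selT_computable Sel A1 A0 Q : recursive_sel Sel -> (1 <= Q)%nat ->
  computable code_S (selT Sel (INR A1 / INR Q) (INR A0 / INR Q)).
Proof.
  intros [PS HPS] HQ.
  set (sl := fun c => b2n (Sel (dec c))).
  set (numf := fun c b (e : nat) => (sl c * (b * A1 + (1 - b) * A0) + (1 - sl c))%nat).
  set (denf := fun c (b e : nat) => (sl c * Q + (1 - sl c))%nat).
  set (SLV := PComp PS [PProj 0]).
  set (NUMP := PComp ADD [PComp MUL [SLV; PComp ADD [PComp MUL [PProj 1; CONST A1];
                   PComp MUL [PComp SUB [CONST 1; PProj 1]; CONST A0]]]; PComp SUB [CONST 1; SLV]]).
  set (DENP := PComp ADD [PComp MUL [SLV; CONST Q]; PComp SUB [CONST 1; SLV]]).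
  assert (HS : forall c b e, (1 <= c)%nat -> eval SLV [c; b; e] (sl c)).
  { intros c b e Hc. eapply ev_c1. apply ev_proj; reflexivity.
    pose proof (HPS (dec c)) as H. unfold code_S in H. rewrite cs_dec in H by auto. exact H. }
  assert (HN : forall c b e, (1 <= c)%nat -> (b <= 1)%nat -> eval NUMP [c; b; e] (numf c b e)).
  { intros c b e Hc Hb. eapply ev_c2. eapply ev_c2. apply HS; auto.
    eapply ev_c2. eapply ev_c2. apply ev_proj; reflexivity. apply ev_const. apply ev_mul.
    eapply ev_c2. eapply ev_c2. apply ev_const. apply ev_proj; reflexivity. apply ev_sub.
    apply ev_const. apply ev_mul. apply ev_add. apply ev_mul.
    eapply ev_c2. apply ev_const. apply HS; auto. apply ev_sub. apply ev_add. }
  assert (HD : forall c b e, (1 <= c)%nat -> (b <= 1)%nat -> eval DENP [c; b; e] (denf c b e)).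
  { intros c b e Hc Hb. eapply ev_c2. eapply ev_c2. apply HS; auto. apply ev_const. apply ev_mul.
    eapply ev_c2. apply ev_const. apply HS; auto. apply ev_sub. apply ev_add. }
  assert (Hden1 : forall c b e, (1 <= denf c b e)%nat).
  { intros. unfold denf. destruct (sl c) as [|[|]]; simpl; lia. }
  assert (Hval : forall s n, selT Sel (INR A1 / INR Q) (INR A0 / INR Q) s =
     INR (nprod (fun pre x => numf (code_sit pre) (b2n x) n) [] s) /
     INR (nprod (fun pre x => denf (code_sit pre) (b2n x) n) [] s)).
  { intros s n. unfold selT, mult_proc. rewrite <- mult_aux_nprod.
    2:{ intros. apply Hden1. }
    apply mult_aux_ext. intros pre x. unfold selD, numf, denf, sl. rewrite dec_cs.
    assert (HQ' : INR Q <> 0) by (apply not_0_INR; lia).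
    destruct (Sel pre), x; simpl b2n.
    + replace (1 * (1 * A1 + (1 - 1) * A0) + (1 - 1))%nat with A1 by lia.
      replace (1 * Q + (1 - 1))%nat with Q by lia. reflexivity.
    + replace (1 * (0 * A1 + (1 - 0) * A0) + (1 - 1))%nat with A0 by lia.
      replace (1 * Q + (1 - 1))%nat with Q by lia. reflexivity.
    + replace (0 * (1 * A1 + (1 - 1) * A0) + (1 - 0))%nat with 1%nat by lia.
      replace (0 * Q + (1 - 0))%nat with 1%nat by lia. simpl. field.
    + replace (0 * (0 * A1 + (1 - 0) * A0) + (1 - 0))%nat with 1%nat by lia.
      replace (0 * Q + (1 - 0))%nat with 1%nat by lia. simpl. field. }
  exists (GTOP NUMP), PZero, (PComp PRED [GTOP DENP]),
    (fun s n => selT Sel (INR A1 / INR Q) (INR A0 / INR Q) s).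
  split.
  - intros s n. unfold rat_rec.
    exists (nprod (fun pre x => numf (code_sit pre) (b2n x) n) [] s), 0%nat,
      (pred (nprod (fun pre x => denf (code_sit pre) (b2n x) n) [] s)).
    split; [|split; [|split]].
    + apply ev_gtop_sit. exact HN.
    + constructor.
    + eapply ev_c1. apply ev_gtop_sit. exact HD. apply ev_pred.
    + rewrite Qval_frac, (Hval s n). f_equal. f_equal.
      pose proof (nprod_pos (fun pre x => denf (code_sit pre) (b2n x) n) [] s
        (fun pre x => Hden1 _ _ _)). lia.
  - intros s n. rewrite Rminus_diag, Rabs_R0. left. apply Rinv_0_lt_compat, pow_lt. lra.
Qed.

Lemma ln_lower x : 0 < x -> 1 - / x <= ln x.
Proof.
  intros Hx. pose proof (exp_ineq1_le (- ln x)). rewrite exp_Ropp, exp_ln in H by auto. lra.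
Qed.

Lemma growth (r th : R) (K : nat) :
  0 <= r -> 0 < th -> r + th <= 1 -> 6 <= INR K * th ->
  forall h c : nat, (h <= c)%nat -> (r + th) * INR c <= INR h ->
  1 + th / (2 * INR K) * INR c <=
  (1 + (1 - r) / INR K) ^ h * (1 - r / INR K) ^ (c - h).
Proof.
  intros Hr Hth Hrt HK h c Hhc Hh.
  assert (HK0 : 0 < INR K) by nra.
  set (k := / INR K).
  assert (Hk0 : 0 < k) by (unfold k; apply Rinv_0_lt_compat; auto).
  assert (Hk : k <= th / 6).
  { unfold k. apply (Rmult_le_reg_l (INR K)); auto. rewrite Rinv_r by lra. lra. }
  assert (Hth1 : th <= 1) by lra.
  set (y := (1 - r) * k). set (z := r * k).
  assert (Ea : 1 + (1 - r) / INR K = 1 + y) by (unfold y, k; field; lra).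
  assert (Eb : 1 - r / INR K = 1 - z) by (unfold z, k; field; lra).
  rewrite Ea, Eb.
  assert (Hy0 : 0 <= y) by (unfold y; nra).
  assert (Hz0 : 0 <= z) by (unfold z; nra).
  assert (Hy1 : y <= k) by (unfold y; nra).
  assert (Hz1 : z <= k) by (unfold z; nra).
  assert (Hz2 : z <= 1/6) by lra.
  assert (Pa : 0 < 1 + y) by lra. assert (Pb : 0 < 1 - z) by lra.
  set (la := ln (1 + y)). set (lb := ln (1 - z)).
  assert (La : y - y * y <= la).
  { pose proof (ln_lower (1 + y) Pa). unfold la.
    assert (y - y*y <= 1 - / (1 + y)); [|lra].
    apply (Rmult_le_reg_l (1 + y)); auto. replace ((1+y) * (1 - /(1+y))) with y by (field; lra). nra. }
  assert (Lb : - (z + 2 * z * z) <= lb).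
  { pose proof (ln_lower (1 - z) Pb). unfold lb.
    assert (- (z + 2*z*z) <= 1 - / (1 - z)); [|lra].
    apply (Rmult_le_reg_l (1 - z)); auto. replace ((1-z) * (1 - /(1-z))) with (-z) by (field; lra). nra. }
  assert (la0 : 0 <= la) by nra.
  assert (lb0 : lb <= 0).
  { pose proof (exp_ineq1_le lb). unfold lb in *. rewrite exp_ln in H by lra. lra. }
  set (rho := r + th).
  set (gam := th / (2 * INR K)).
  assert (Egam : gam = th * k / 2) by (unfold gam, k; field; lra).
  assert (Step3 : gam <= rho * la + (1 - rho) * lb).
  { assert (rho * (y - y*y) + (1 - rho) * (- (z + 2*z*z)) <= rho * la + (1 - rho) * lb).
    { assert (0 <= rho) by (unfold rho; lra). assert (0 <= 1 - rho) by (unfold rho; lra). nra. }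
    assert (gam <= rho * (y - y*y) + (1 - rho) * (- (z + 2*z*z))); [|lra].
    rewrite Egam. unfold y, z, rho.
    assert (0 <= r <= 1) by lra.
    assert (E : (r + th) * ((1 - r) * k - (1 - r) * k * ((1 - r) * k)) +
       (1 - (r + th)) * - (r * k + 2 * (r * k) * (r * k)) =
       th * k - k * k * ((r + th) * (1-r)*(1-r) + 2 * (1 - (r+th)) * r * r)) by ring.
    rewrite E.
    assert ((r + th) * (1-r)*(1-r) + 2 * (1 - (r+th)) * r * r <= 3).
    { assert (0 <= r + th <= 1) by lra. assert (0 <= (1-r)*(1-r) <= 1) by nra.
      assert (0 <= r*r <= 1) by nra. nra. }
    assert (k * k * ((r + th) * (1-r)*(1-r) + 2 * (1 - (r+th)) * r * r) <= k * k * 3).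
    { apply Rmult_le_compat_l; nra. }
    nra. }
  assert (HP : 0 < (1 + y) ^ h * (1 - z) ^ (c - h)) by (apply Rmult_lt_0_compat; apply pow_lt; lra).
  assert (Hln : gam * INR c <= ln ((1 + y) ^ h * (1 - z) ^ (c - h))).
  { rewrite ln_mult by (apply pow_lt; lra). rewrite !ln_pow by lra. fold la lb.
    rewrite minus_INR by auto.
    assert (INR c * (rho * la + (1 - rho) * lb) <= INR h * la + (INR c - INR h) * lb).
    { assert (0 <= (INR h - rho * INR c) * (la - lb)). apply Rmult_le_pos; unfold rho; lra. nra. }
    assert (0 <= INR c) by apply pos_INR. nra. }
  pose proof (exp_ineq1_le (gam * INR c)).
  assert (exp (gam * INR c) <= (1 + y) ^ h * (1 - z) ^ (c - h)).
  { rewrite <- (exp_ln _ HP). destruct Hln. left; apply exp_increasing; auto. rewrite H0; lra. }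
  lra.
Qed.

Lemma rat_between t eps : 0 <= t -> 0 < eps ->
  exists r1 R0 : nat, (1 <= R0)%nat /\ t < INR r1 / INR R0 < t + eps.
Proof.
  intros Ht He. destruct (archimed_cor1 eps He) as [R0 [HR HR0]].
  assert (HR' : 0 < INR R0) by (apply lt_0_INR; auto).
  destruct (archimed (t * INR R0)) as [A B].
  assert (Hup : (0 < up (t * INR R0))%Z).
  { apply lt_IZR. assert (0 <= t * INR R0) by nra. simpl. lra. }
  exists (Z.to_nat (up (t * INR R0))), R0. split. lia.
  rewrite INR_IZR_INZ, Z2Nat.id by lia.
  split.
  - apply (Rmult_lt_reg_r (INR R0)); auto. unfold Rdiv. rewrite Rmult_assoc, Rinv_l by lra. lra.
  - apply (Rmult_lt_reg_r (INR R0)); auto. unfold Rdiv. rewrite Rmult_assoc, Rinv_l by lra.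
    assert (/ INR R0 * INR R0 = 1) by (field; lra).
    assert (eps * INR R0 > 1).
    { apply (Rmult_lt_reg_r (/ INR R0)). apply Rinv_0_lt_compat; auto.
      rewrite Rmult_assoc, Rinv_r, Rmult_1_l, Rmult_1_r by lra. lra. }
    lra.
Qed.

Lemma prefix_S w n : prefix w (S n) = prefix w n ++ [w n].
Proof. unfold prefix. rewrite seq_S, map_app. reflexivity. Qed.

Lemma hits_le_count Sel w n : (sel_hits Sel w n <= sel_count Sel w n)%nat.
Proof. induction n; simpl. lia. destruct (Sel (prefix w n)), (w n); simpl; lia. Qed.

Lemma mult_aux_nonneg D pre s : (forall pre x, 0 <= D pre x) -> 0 <= mult_aux D pre s.
Proof. intros H. revert pre; induction s; intros; simpl. lra. apply Rmult_le_pos; auto. Qed.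

Lemma selT_tsm Sel a1 a0 (I : ivl) : 0 <= a1 -> 0 <= a0 ->
  (forall p, lo I <= p <= hi I -> p * a1 + (1 - p) * a0 <= 1) ->
  test_supermartingale I (selT Sel a1 a0).
Proof.
  intros H1 H0 Hp. unfold selT, mult_proc. split; [|split].
  - intros s. apply mult_aux_nonneg. intros pre x. unfold selD.
    destruct (Sel pre), x; lra.
  - reflexivity.
  - intros s p Hpi. rewrite !mult_aux_app. simpl.
    set (V := mult_aux (selD Sel a1 a0) [] s).
    assert (0 <= V) by (apply mult_aux_nonneg; intros; unfold selD; destruct (Sel pre), x; lra).
    unfold selD. destruct (Sel s).
    + specialize (Hp p Hpi).
      replace (p * (V * a1 - V) + (1 - p) * (V * a0 - V)) with (V * (p * a1 + (1 - p) * a0 - 1)) by ring.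
      assert (0 <= V * (1 - (p * a1 + (1 - p) * a0))) by (apply Rmult_le_pos; lra). lra.
    + lra.
Qed.

Lemma selT_path Sel a1 a0 w n :
  selT Sel a1 a0 (prefix w n) =
  a1 ^ (sel_hits Sel w n) * a0 ^ (sel_count Sel w n - sel_hits Sel w n).
Proof.
  induction n.
  - simpl. unfold selT, mult_proc, prefix. simpl. ring.
  - unfold selT, mult_proc in *. rewrite prefix_S, mult_aux_app, IHn. simpl.
    pose proof (hits_le_count Sel w n).
    unfold selD. destruct (Sel (prefix w n)), (w n); simpl b2n; simpl andb.
    + replace (sel_hits Sel w n + 1)%nat with (S (sel_hits Sel w n)) by lia.
      replace (sel_count Sel w n + 1 - S (sel_hits Sel w n))%nat with (sel_count Sel w n - sel_hits Sel w n)%nat by lia.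
      simpl. ring.
    + replace (sel_hits Sel w n + 0)%nat with (sel_hits Sel w n) by lia.
      replace (sel_count Sel w n + 1 - sel_hits Sel w n)%nat with (S (sel_count Sel w n - sel_hits Sel w n))%nat by lia.
      simpl. ring.
    + rewrite !Nat.add_0_r. ring.
    + rewrite !Nat.add_0_r. ring.
Qed.

Definition favh (fav : bool) Sel w n : nat :=
  if fav then sel_hits Sel w n else (sel_count Sel w n - sel_hits Sel w n)%nat.

Lemma side (w : path) (I : ivl) (Sel : sit -> bool) (fav : bool) (t eps : R) :
  recursive_sel Sel -> 0 <= t -> 0 < eps -> t + eps <= 1 ->
  (forall p, lo I <= p <= hi I -> (if fav then p else 1 - p) <= t) ->
  exists T gam, test_supermartingale I T /\ computable code_S T /\ 0 < gam /\
    forall n, (t + eps) * INR (sel_count Sel w n) <= INR (favh fav Sel w n) ->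
      1 + gam * INR (sel_count Sel w n) <= T (prefix w n).
Proof.
  intros Hsel Ht He Hte Hp.
  destruct (rat_between t (eps / 2) Ht ltac:(lra)) as [r1 [R0 [HR0 [Hr1 Hr2]]]].
  set (r := INR r1 / INR R0) in *.
  set (th := eps / 2).
  destruct (INR_archimed th 6 ltac:(unfold th; lra)) as [K HK].
  assert (HR0' : 0 < INR R0) by (apply lt_0_INR; lia).
  assert (HK0 : 0 < INR K) by (unfold th in HK; nra).
  assert (HK1 : (1 <= K)%nat) by (destruct K; [simpl in HK0; lra | lia]).
  assert (Hr1R : (r1 <= R0)%nat).
  { apply INR_le. assert (r <= 1) by lra. unfold r in H.
    apply (Rmult_le_compat_r (INR R0)) in H; [|lra]. unfold Rdiv in H.
    rewrite Rmult_assoc, Rinv_l, Rmult_1_r, Rmult_1_l in H by lra. exact H. }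
  set (Q := (K * R0)%nat). set (A1 := (K * R0 + R0 - r1)%nat). set (A0 := (K * R0 - r1)%nat).
  assert (HQ : (1 <= Q)%nat) by (unfold Q; nia).
  set (a := 1 + (1 - r) / INR K). set (b := 1 - r / INR K).
  assert (Ea : INR A1 / INR Q = a).
  { unfold A1, Q, a, r. rewrite minus_INR by nia. rewrite plus_INR, !mult_INR. field. lra. }
  assert (Eb : INR A0 / INR Q = b).
  { unfold A0, Q, b, r. rewrite minus_INR by nia. rewrite !mult_INR. field. lra. }
  assert (Hr0 : 0 <= r) by lra.
  assert (Hrl1 : r < 1) by lra.
  assert (Ha : 0 <= a) by (unfold a; assert (0 <= (1 - r) / INR K) by (unfold Rdiv; apply Rmult_le_pos; [lra|left; apply Rinv_0_lt_compat; lra]); lra).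
  assert (Hb : 0 <= b).
  { unfold b. assert (r / INR K <= 1); [|lra].
    apply (Rmult_le_reg_r (INR K)); auto. unfold Rdiv. rewrite Rmult_assoc, Rinv_l by lra.
    assert (1 <= INR K) by (apply (le_INR 1); auto). lra. }
  assert (Hg := growth r th K Hr0 ltac:(unfold th; lra) ltac:(unfold th; lra) ltac:(lra)).
  exists (if fav then selT Sel a b else selT Sel b a), (th / (2 * INR K)).
  split; [|split; [|split]].
  - destruct fav; apply selT_tsm; auto; intros p Hpi; specialize (Hp p Hpi);
      unfold a, b; field_simplify; try lra;
      (apply (Rmult_le_reg_r (INR K)); auto; unfold Rdiv; rewrite Rmult_assoc, Rinv_l, Rmult_1_r by lra; nra).
  - destruct fav; [rewrite <- Ea, <- Eb | rewrite <- Ea, <- Eb]; apply selT_computable; auto.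
  - apply Rdiv_lt_0_compat; unfold th; lra.
  - intros n Hn. pose proof (hits_le_count Sel w n).
    unfold favh in Hn. destruct fav; rewrite selT_path.
    + pose proof (pos_INR (sel_count Sel w n)). apply Hg. auto. unfold th. nra.
    + replace (sel_hits Sel w n) with (sel_count Sel w n - (sel_count Sel w n - sel_hits Sel w n))%nat at 1 by lia.
      pose proof (pos_INR (sel_count Sel w n)). rewrite (Rmult_comm (b ^ _) (a ^ _)). apply Hg. lia. unfold th. nra.
Qed.

Lemma count_mono Sel w n m : (n <= m)%nat -> (sel_count Sel w n <= sel_count Sel w m)%nat.
Proof. induction 1. lia. simpl. lia. Qed.

Lemma freq_bad (w : path) (I : ivl) (Sel : sit -> bool) :
  (forall M : nat, exists N, forall n, (N <= n)%nat -> (M < sel_count Sel w n)%nat) ->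
  ~ ((forall eps, 0 < eps -> exists N, forall n, (N <= n)%nat -> lo I - eps < sel_freq Sel w n) /\
     (forall eps, 0 < eps -> exists N, forall n, (N <= n)%nat -> sel_freq Sel w n < hi I + eps)) ->
  exists (fav : bool) (t eps : R), 0 <= t /\ 0 < eps /\ t + eps <= 1 /\
    (forall p, lo I <= p <= hi I -> (if fav then p else 1 - p) <= t) /\
    forall N, exists n, (N <= n)%nat /\ (t + eps) * INR (sel_count Sel w n) <= INR (favh fav Sel w n).
Proof.
  intros Hc Hnot. destruct (Hc 0%nat) as [N0 HN0].
  pose proof (lo_ge0 I). pose proof (lo_le_hi I). pose proof (hi_le1 I).
  assert (Hf : forall n, (N0 <= n)%nat -> 0 < INR (sel_count Sel w n) /\
     sel_freq Sel w n * INR (sel_count Sel w n) = INR (sel_hits Sel w n) /\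
     INR (sel_hits Sel w n) <= INR (sel_count Sel w n)).
  { intros n Hn. specialize (HN0 n Hn). assert (0 < INR (sel_count Sel w n)) by (apply lt_0_INR; lia).
    split; auto. split. unfold sel_freq. field. lra. apply le_INR, hits_le_count. }
  apply not_and_or in Hnot. destruct Hnot as [Hl | Hh].
  - apply not_all_ex_not in Hl. destruct Hl as [eps Hl].
    apply imply_to_and in Hl. destruct Hl as [He Hl].
    assert (Hl' : forall N, exists n, (N <= n)%nat /\ sel_freq Sel w n <= lo I - eps).
    { intros N. apply NNPP. intros C. apply Hl. exists N. intros n Hn.
      apply Rnot_le_lt. intros C2. apply C. exists n. auto. }
    exists false, (1 - lo I), eps. split; [lra|split; [auto|split; [|split]]].
    + destruct (Hl' N0) as [n [Hn Hfr]]. destruct (Hf n Hn) as [A [B C]].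
      assert (0 <= sel_freq Sel w n).
      { unfold sel_freq. apply Rmult_le_pos. apply pos_INR. left; apply Rinv_0_lt_compat; auto. }
      lra.
    + intros p Hp. lra.
    + intros N. destruct (Hl' (max N N0)) as [n [Hn Hfr]]. exists n. split. lia.
      destruct (Hf n ltac:(lia)) as [A [B C]]. unfold favh.
      rewrite minus_INR by apply hits_le_count.
      assert (sel_freq Sel w n * INR (sel_count Sel w n) <= (lo I - eps) * INR (sel_count Sel w n)).
      { apply Rmult_le_compat_r; lra. }
      nra.
  - apply not_all_ex_not in Hh. destruct Hh as [eps Hh].
    apply imply_to_and in Hh. destruct Hh as [He Hh].
    assert (Hh' : forall N, exists n, (N <= n)%nat /\ hi I + eps <= sel_freq Sel w n).
    { intros N. apply NNPP. intros C. apply Hh. exists N. intros n Hn.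
      apply Rnot_le_lt. intros C2. apply C. exists n. auto. }
    exists true, (hi I), eps. split; [lra|split; [auto|split; [|split]]].
    + destruct (Hh' N0) as [n [Hn Hfr]]. destruct (Hf n Hn) as [A [B C]].
      assert (sel_freq Sel w n <= 1).
      { apply (Rmult_le_reg_r (INR (sel_count Sel w n))); auto. lra. }
      lra.
    + intros p Hp. lra.
    + intros N. destruct (Hh' (max N N0)) as [n [Hn Hfr]]. exists n. split. lia.
      destruct (Hf n ltac:(lia)) as [A [B C]]. unfold favh.
      assert ((hi I + eps) * INR (sel_count Sel w n) <= sel_freq Sel w n * INR (sel_count Sel w n)).
      { apply Rmult_le_compat_r; lra. }
      lra.
Qed.

Lemma C_CH w I : C_random w I -> CH_random w I.
Proof.
  intros HC Sel Hsel Hc. apply NNPP. intros Hnot.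
  destruct (freq_bad w I Sel Hc Hnot) as [fav [t [eps [Ht [He [Hte [Hp Hinf]]]]]]].
  destruct (side w I Sel fav t eps Hsel Ht He Hte Hp) as [T [gam [HT [HTc [Hg HTg]]]]].
  apply HC. exists T. split; auto. split; auto.
  intros M N. destruct (INR_archimed gam M Hg) as [K HK].
  destruct (Hc K) as [N1 HN1].
  destruct (Hinf (max N N1)) as [n [Hn Hgood]].
  exists n. split. lia. specialize (HTg n Hgood). specialize (HN1 n ltac:(lia)).
  assert (INR K < INR (sel_count Sel w n)) by (apply lt_INR; auto).
  nra.
Qed.

Fixpoint cnt (Sel : sit -> bool) (n : nat) : nat :=
  match n with O => O | S k => (cnt Sel k + b2n (Sel (repeat false k)))%nat end.

Lemma repeat_S {A} (a : A) k : repeat a (S k) = repeat a k ++ [a].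
Proof. induction k. reflexivity. simpl in *. rewrite IHk. reflexivity. Qed.

Lemma cs_repeat k : code_sit (repeat false k) = pow2 k.
Proof. induction k. reflexivity. rewrite repeat_S, cs_app, IHk. simpl. lia. Qed.

Lemma count_cnt Sel w n : temporal Sel -> sel_count Sel w n = cnt Sel n.
Proof.
  intros Ht. induction n. reflexivity. simpl. rewrite IHn. f_equal. f_equal.
  apply Ht. unfold prefix. rewrite length_map, length_seq, repeat_length. reflexivity.
Qed.

Lemma cnt_computable Sel m : recursive_sel Sel -> (1 <= m)%nat ->
  computable code_N (fun n => INR (cnt Sel n) / INR m).
Proof.
  intros [PS HPS] Hm.
  set (CNT := PPrec PZero (PComp ADD [PProj 1; PComp PS [PComp POW2 [PProj 0]]])).
  assert (HC : forall n rest, eval CNT (n :: rest) (cnt Sel n)).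
  { intros n rest. induction n. constructor. constructor.
    econstructor. exact IHn. eapply ev_c2. apply ev_proj; reflexivity.
    eapply ev_c1. eapply ev_c1. apply ev_proj; reflexivity. apply ev_pow2.
    pose proof (HPS (repeat false n)) as H. unfold code_S in H. rewrite cs_repeat in H. exact H.
    apply ev_add. }
  exists CNT, PZero, (CONST (m - 1)), (fun n _ => INR (cnt Sel n) / INR m). split.
  - intros n j. exists (cnt Sel n), 0%nat, (m - 1)%nat. split; [|split; [|split]].
    + apply HC.
    + constructor.
    + apply ev_const.
    + rewrite Qval_frac. f_equal. f_equal. lia.
  - intros n j. rewrite Rminus_diag, Rabs_R0. left. apply Rinv_0_lt_compat, pow_lt. lra.
Qed.

Lemma S_wCH w I : S_random w I -> wCH_random w I.
Proof.
  intros HS Sel Hsel Htemp Hc. apply NNPP. intros Hnot.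
  destruct (freq_bad w I Sel Hc Hnot) as [fav [t [eps [Ht [He [Hte [Hp Hinf]]]]]]].
  destruct (side w I Sel fav t eps Hsel Ht He Hte Hp) as [T [gam [HT [HTc [Hg HTg]]]]].
  destruct (archimed_cor1 gam Hg) as [m [Hm Hm0]].
  assert (Hm' : 0 < INR m) by (apply lt_0_INR; lia).
  apply HS. exists T, (fun n => INR (cnt Sel n) / INR m).
  split; auto. split; auto. split; [apply cnt_computable; auto; lia|].
  split; [intros n; unfold Rdiv; apply Rmult_le_pos; [apply pos_INR|left; apply Rinv_0_lt_compat; auto]|].
  split.
  - intros n. unfold Rdiv. apply Rmult_le_compat_r. left; apply Rinv_0_lt_compat; auto.
    apply le_INR. simpl. lia.
  - split.
    + intros M. destruct (INR_archimed (/ INR m) M ltac:(apply Rinv_0_lt_compat; auto)) as [K HK].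
      destruct (Hc K) as [N1 HN1]. exists N1. specialize (HN1 N1 (le_n _)).
      rewrite (count_cnt Sel w N1 Htemp) in HN1. apply lt_INR in HN1.
      unfold Rdiv. assert (0 < / INR m) by (apply Rinv_0_lt_compat; auto). nra.
    + intros e N He'. destruct (Hinf N) as [n [Hn Hgood]]. exists n. split; auto.
      specialize (HTg n Hgood). rewrite (count_cnt Sel w n Htemp) in HTg.
      assert (INR (cnt Sel n) / INR m <= gam * INR (cnt Sel n)).
      { unfold Rdiv. rewrite Rmult_comm. apply Rmult_le_compat_r. apply pos_INR. lra. }
      lra.
Qed.

Lemma INR_sub_max X Y Z : 0 < Z -> INR (X - Y) / Z = Rmax ((INR X - INR Y) / Z) 0.
Proof.
  intros HZ. destruct (le_lt_dec Y X).
  - rewrite minus_INR by auto. rewrite Rmax_left. reflexivity.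
    apply le_INR in l. unfold Rdiv. apply Rmult_le_pos. lra. left; apply Rinv_0_lt_compat; auto.
  - replace (X - Y)%nat with 0%nat by lia. rewrite Rmax_right. simpl. unfold Rdiv; ring.
    apply lt_INR in l. unfold Rdiv. assert (0 < / Z) by (apply Rinv_0_lt_compat; auto). nra.
Qed.

Lemma Un_cv_max0 u l : Un_cv u l -> Un_cv (fun n => Rmax (u n) 0) (Rmax l 0).
Proof.
  intros H eps He. destruct (H eps He) as [N HN]. exists N. intros n Hn.
  specialize (HN n Hn). unfold R_dist in *.
  unfold Rmax. destruct (Rle_dec (u n) 0), (Rle_dec l 0);
    apply Rabs_def2 in HN; apply Rabs_def1; lra.
Qed.

Lemma Un_cv_const c : Un_cv (fun _ => c) c.
Proof. intros eps He. exists 0%nat. intros. unfold R_dist. rewrite Rminus_diag, Rabs_R0. auto. Qed.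

Lemma mult_aux_mono f g pre s : (forall pre x, 0 <= f pre x <= g pre x) ->
  mult_aux f pre s <= mult_aux g pre s.
Proof.
  intros H. revert pre. induction s; intros; simpl. lra.
  apply Rmult_le_compat. apply H. apply mult_aux_nonneg. apply H. apply H. apply IHs.
Qed.

Lemma mult_aux_cv (F : nat -> sit -> bool -> R) (L : sit -> bool -> R) pre s :
  (forall pre x, Un_cv (fun n => F n pre x) (L pre x)) ->
  Un_cv (fun n => mult_aux (F n) pre s) (mult_aux L pre s).
Proof.
  intros H. revert pre. induction s; intros; simpl. apply Un_cv_const.
  apply CV_mult. apply H. apply IHs.
Qed.

Lemma mult_aux_max0 D s : (forall s, 0 <= mult_proc D s) ->
  mult_aux (fun pre x => Rmax (D pre x) 0) [] s = mult_aux D [] s.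
Proof.
  intros H. induction s using rev_ind. reflexivity.
  rewrite !mult_aux_app, IHs. simpl.
  specialize (H (s ++ [x])). unfold mult_proc in H. rewrite mult_aux_app in H. simpl in H.
  pose proof (H0 := H). 
  assert (Hs : 0 <= mult_aux D [] s) by (rewrite <- IHs; apply mult_aux_nonneg; intros; apply Rmax_r).
  destruct Hs as [Hs|Hs].
  - rewrite Rmax_left. reflexivity.
    apply (Rmult_le_reg_l (mult_aux D [] s)); auto. lra.
  - rewrite <- Hs. ring.
Qed.

Lemma ML_wML w I : ML_random w I -> wML_random w I.
Proof.
  intros HML [D [[P [M [Dd [q [Hq [Hmono Hcv]]]]]] [Htsm Hlim]]].
  apply HML. exists (mult_proc D). split; auto. split; auto.
  assert (Hch : forall a n, {pmd : nat * nat * nat |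
     eval P (code_SX a ++ [n]) (fst (fst pmd)) /\ eval M (code_SX a ++ [n]) (snd (fst pmd)) /\
     eval Dd (code_SX a ++ [n]) (snd pmd) /\ q a n = Qval (fst (fst pmd)) (snd (fst pmd)) (snd pmd)}).
  { intros a n. apply constructive_indefinite_description.
    destruct (Hq a n) as [p [m [d H]]]. exists (p, m, d). exact H. }
  set (pf := fun a n => fst (fst (proj1_sig (Hch a n)))).
  set (mf := fun a n => snd (fst (proj1_sig (Hch a n)))).
  set (df := fun a n => snd (proj1_sig (Hch a n))).
  assert (HP : forall a n, eval P (code_SX a ++ [n]) (pf a n)) by (intros; unfold pf; destruct (Hch a n); simpl; tauto).
  assert (HM : forall a n, eval M (code_SX a ++ [n]) (mf a n)) by (intros; unfold mf; destruct (Hch a n); simpl; tauto).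
  assert (HD : forall a n, eval Dd (code_SX a ++ [n]) (df a n)) by (intros; unfold df; destruct (Hch a n); simpl; tauto).
  assert (HQ : forall a n, q a n = Qval (pf a n) (mf a n) (df a n)) by (intros; unfold pf, mf, df; destruct (Hch a n); simpl; tauto).
  set (numf := fun c b e => (pf (dec c, nb b) e - mf (dec c, nb b) e)%nat).
  set (denf := fun c b e => S (df (dec c, nb b) e)).
  assert (Hargs : forall c b e, (1 <= c)%nat -> (b <= 1)%nat -> code_SX (dec c, nb b) ++ [e] = [c; b; e]).
  { intros. unfold code_SX. simpl. rewrite cs_dec, b2n_nb by auto. reflexivity. }
  assert (HN : forall c b e, (1 <= c)%nat -> (b <= 1)%nat -> eval (PComp SUB [P; M]) [c; b; e] (numf c b e)).
  { intros c b e Hc Hb. eapply ev_c2. rewrite <- Hargs by auto. apply HP.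
    rewrite <- Hargs by auto. apply HM. apply ev_sub. }
  assert (HDn : forall c b e, (1 <= c)%nat -> (b <= 1)%nat -> eval (PComp PSucc [Dd]) [c; b; e] (denf c b e)).
  { intros c b e Hc Hb. eapply ev_c1. rewrite <- Hargs by auto. apply HD. constructor. }
  set (Fq := fun n pre x => Rmax (q (pre, x) n) 0).
  assert (Hval : forall s n, mult_aux (Fq n) [] s =
     INR (nprod (fun pre x => numf (code_sit pre) (b2n x) n) [] s) /
     INR (nprod (fun pre x => denf (code_sit pre) (b2n x) n) [] s)).
  { intros s n. rewrite <- mult_aux_nprod by (intros; unfold denf; lia).
    apply mult_aux_ext. intros pre x. unfold Fq, numf, denf. rewrite dec_cs, nb_b2n, HQ.
    rewrite INR_sub_max by (apply lt_0_INR; lia). reflexivity. }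
  exists (GTOP (PComp SUB [P; M])), PZero, (PComp PRED [GTOP (PComp PSucc [Dd])]),
    (fun s n => mult_aux (Fq n) [] s).
  split; [|split].
  - intros s n. exists (nprod (fun pre x => numf (code_sit pre) (b2n x) n) [] s), 0%nat,
      (pred (nprod (fun pre x => denf (code_sit pre) (b2n x) n) [] s)).
    split; [|split; [|split]].
    + apply ev_gtop_sit. exact HN.
    + constructor.
    + eapply ev_c1. apply ev_gtop_sit. exact HDn. apply ev_pred.
    + rewrite Qval_frac, (Hval s n). f_equal. f_equal.
      pose proof (nprod_pos (fun pre x => denf (code_sit pre) (b2n x) n) [] s
        (fun pre x => ltac:(unfold denf; lia))). lia.
  - intros s n. apply mult_aux_mono. intros pre x. unfold Fq. split. apply Rmax_r.
    apply Rle_max_compat_r. apply (Hmono (pre, x)).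
  - intros s. unfold mult_proc. rewrite <- mult_aux_max0 by (apply Htsm).
    apply (mult_aux_cv Fq (fun pre x => Rmax (D pre x) 0)). intros pre x.
    apply Un_cv_max0. apply (Hcv (pre, x)).
Qed.

Lemma pow2_INR n : INR (pow2 n) = 2 ^ n.
Proof. induction n. reflexivity. simpl pow2. rewrite plus_INR, IHn. simpl. ring. Qed.

Lemma Un_cv_inv_ge1 u l : Un_cv u l -> 1 <= l -> (forall n, l <= u n) -> Un_cv (fun n => / u n) (/ l).
Proof.
  intros H Hl Hu eps He. destruct (H eps He) as [N HN]. exists N. intros n Hn.
  specialize (HN n Hn). specialize (Hu n). unfold R_dist in *.
  assert (Hi : / u n <= / l) by (apply Rinv_le_contravar; lra).
  rewrite Rabs_left1 by lra. rewrite Rabs_right in HN by lra.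
  replace (- (/ u n - / l)) with ((u n - l) * / (u n * l)) by (field; lra).
  assert (/ (u n * l) <= 1).
  { rewrite <- Rinv_1. apply Rinv_le_contravar. lra. nra. }
  assert (0 <= u n - l) by lra. nra.
Qed.

Lemma approx_cv (q : nat -> R) (t : R) (k : R) :
  (forall n, Rabs (t - q n) <= / 2 ^ n) -> Un_cv (fun n => q n + k * / 2 ^ n) t.
Proof.
  intros H eps He. destruct (cv_pow_half 1 (eps / (1 + Rabs k)) ltac:(pose proof (Rabs_pos k); unfold Rdiv; apply Rmult_lt_0_compat; [lra|apply Rinv_0_lt_compat; lra])) as [N HN].
  exists N. intros n Hn. specialize (HN n Hn). specialize (H n). unfold R_dist in *.
  rewrite Rminus_0_r in HN. unfold Rdiv in HN. rewrite Rmult_1_l in HN.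
  assert (Hp : 0 < / 2 ^ n) by (apply Rinv_0_lt_compat, pow_lt; lra).
  rewrite Rabs_right in HN by lra.
  pose proof (Rabs_pos k).
  assert (Habs : Rabs (k * / 2 ^ n) = Rabs k * / 2 ^ n) by (rewrite Rabs_mult, (Rabs_right (/ 2 ^ n)) by lra; reflexivity).
  assert (HH : Rabs (q n + k * / 2 ^ n - t) <= Rabs (t - q n) + Rabs (k * / 2 ^ n)).
  { replace (q n + k * / 2 ^ n - t) with (- (t - q n) + k * / 2 ^ n) by ring.
    eapply Rle_trans. apply Rabs_triang. rewrite Rabs_Ropp. lra. }
  rewrite Habs in HH.
  assert ((1 + Rabs k) * / 2 ^ n < eps).
  { apply (Rmult_lt_reg_r (/ (1 + Rabs k))). apply Rinv_0_lt_compat; lra.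
    rewrite (Rmult_comm (1 + Rabs k)), Rmult_assoc, Rinv_r, Rmult_1_r by lra. exact HN. }
  nra.
Qed.

Lemma abs_le_bounds x a : Rabs x <= a -> - a <= x <= a.
Proof. unfold Rabs. destruct (Rcase_abs x); lra. Qed.

Lemma Un_cv_plus_const u l c : Un_cv u l -> Un_cv (fun n => u n + c) (l + c).
Proof. intros H eps He. destruct (H eps He) as [N HN]. exists N. intros n Hn.
  unfold R_dist in *. replace (u n + c - (l + c)) with (u n - l) by ring. auto. Qed.

Lemma tsm_ext I f g : (forall s, f s = g s) -> test_supermartingale I f -> test_supermartingale I g.
Proof.
  intros E [H0 [H1 H2]]. split; [|split].
  - intros s. rewrite <- E. auto.
  - rewrite <- E. auto.
  - intros s p Hp. rewrite <- !E. apply H2; auto.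
Qed.

Ltac ev_auto := repeat match goal with
 | |- eval (PComp _ [_]) _ _ => eapply ev_c1
 | |- eval (PComp _ [_;_]) _ _ => eapply ev_c2
 | |- eval (PComp _ [_;_;_]) _ _ => eapply ev_c3
 | |- eval ADD _ _ => apply ev_add
 | |- eval MUL _ _ => apply ev_mul
 | |- eval SUB _ _ => apply ev_sub
 | |- eval PRED _ _ => apply ev_pred
 | |- eval POW2 _ _ => apply ev_pow2
 | |- eval (PProj _) _ _ => apply ev_proj; reflexivity
 | |- eval (CONST _) _ _ => apply ev_const
 | |- eval PSucc _ _ => constructor
 | |- eval PZero _ _ => constructor
 end.

Lemma wML_C w I : wML_random w I -> C_random w I.
Proof.
  intros HW [T [Htsm [[P [M [Dd [q [Hq Hqa]]]]] Hlim]]].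
  pose proof Htsm as [T0 [T1 Tsup]].
  set (D := fun pre x => (T (pre ++ [x]) + 1) / (T pre + 1)).
  assert (HDm : forall s, mult_proc D s = (T s + 1) / 2).
  { intros s. unfold mult_proc. induction s using rev_ind.
    - simpl. rewrite T1. field.
    - rewrite mult_aux_app, IHs. simpl. unfold D. specialize (T0 s). field. lra. }
  apply HW. exists D. split; [|split].
  2:{ apply (tsm_ext I (fun s => (T s + 1) / 2)). intros; rewrite HDm; auto.
      split; [|split].
      - intros s. specialize (T0 s). lra.
      - rewrite T1. field.
      - intros s p Hp. specialize (Tsup s p Hp). simpl in *. lra. }
  2:{ intros M0 N. destruct (Hlim (2 * M0) N) as [n [Hn HM]]. exists n. split; auto.
      rewrite HDm. lra. }
  assert (Hch : forall s n, {pmd : nat * nat * nat |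
     eval P (code_S s ++ [n]) (fst (fst pmd)) /\ eval M (code_S s ++ [n]) (snd (fst pmd)) /\
     eval Dd (code_S s ++ [n]) (snd pmd) /\ q s n = Qval (fst (fst pmd)) (snd (fst pmd)) (snd pmd)}).
  { intros s n. apply constructive_indefinite_description.
    destruct (Hq s n) as [p [m [d H]]]. exists (p, m, d). exact H. }
  set (pf := fun s n => fst (fst (proj1_sig (Hch s n)))).
  set (mf := fun s n => snd (fst (proj1_sig (Hch s n)))).
  set (df := fun s n => snd (proj1_sig (Hch s n))).
  assert (HP : forall s n, eval P [code_sit s; n] (pf s n)) by (intros; unfold pf; destruct (Hch s n); simpl; tauto).
  assert (HM : forall s n, eval M [code_sit s; n] (mf s n)) by (intros; unfold mf; destruct (Hch s n); simpl; tauto).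
  assert (HD : forall s n, eval Dd [code_sit s; n] (df s n)) by (intros; unfold df; destruct (Hch s n); simpl; tauto).
  assert (HQ : forall s n, q s n = Qval (pf s n) (mf s n) (df s n)) by (intros; unfold pf, mf, df; destruct (Hch s n); simpl; tauto).
  assert (Hb : forall s n, - / 2 ^ n <= q s n - T s <= / 2 ^ n).
  { intros s n. specialize (Hqa s n). rewrite Rabs_minus_sym in Hqa. apply abs_le_bounds in Hqa. lra. }
  assert (Hhalf : forall n, / 2 ^ S n = / 2 ^ n * / 2).
  { intros n. simpl. rewrite Rinv_mult. ring. }
  assert (Hpos : forall n, 0 < / 2 ^ n) by (intros; apply Rinv_0_lt_compat, pow_lt; lra).
  set (lo_ := fun s n => q s n + (-3) * / 2 ^ n + 1).
  set (up_ := fun s n => q s n + 3 * / 2 ^ n + 1).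
  set (qD := fun (a : sit * bool) n => Rmax (lo_ (fst a ++ [snd a]) n) 0 / up_ (fst a) n).
  assert (Hup1 : forall s n, T s + 1 <= up_ s n).
  { intros s n. unfold up_. specialize (Hb s n). specialize (Hpos n). lra. }
  assert (Hupm : forall s n, up_ s (S n) <= up_ s n).
  { intros s n. unfold up_. pose proof (Hb s n). pose proof (Hb s (S n)). rewrite Hhalf in *.
    specialize (Hpos n). lra. }
  assert (Hlom : forall s n, lo_ s n <= lo_ s (S n)).
  { intros s n. unfold lo_. pose proof (Hb s n). pose proof (Hb s (S n)). rewrite Hhalf in *.
    specialize (Hpos n). lra. }
  exists (PComp MUL [
            PComp SUB [PComp ADD [PComp MUL [PComp P [PComp ADD [PComp MUL [CONST 2; PProj 0]; PProj 1]; PProj 2]; PComp POW2 [PProj 2]];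
                                  PComp MUL [PComp PSucc [PComp Dd [PComp ADD [PComp MUL [CONST 2; PProj 0]; PProj 1]; PProj 2]]; PComp POW2 [PProj 2]]];
                       PComp ADD [PComp MUL [PComp M [PComp ADD [PComp MUL [CONST 2; PProj 0]; PProj 1]; PProj 2]; PComp POW2 [PProj 2]];
                                  PComp MUL [CONST 3; PComp PSucc [PComp Dd [PComp ADD [PComp MUL [CONST 2; PProj 0]; PProj 1]; PProj 2]]]]];
            PComp PSucc [PComp Dd [PProj 0; PProj 2]]]),
    PZero,
    (PComp PRED [PComp MUL [PComp PSucc [PComp Dd [PComp ADD [PComp MUL [CONST 2; PProj 0]; PProj 1]; PProj 2]];
        PComp SUB [PComp ADD [PComp ADD [PComp MUL [PComp P [PProj 0; PProj 2]; PComp POW2 [PProj 2]];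
                                         PComp MUL [CONST 3; PComp PSucc [PComp Dd [PProj 0; PProj 2]]]];
                              PComp MUL [PComp PSucc [PComp Dd [PProj 0; PProj 2]]; PComp POW2 [PProj 2]]];
                   PComp MUL [PComp M [PProj 0; PProj 2]; PComp POW2 [PProj 2]]]]]),
    qD.
  split; [|split].
  - intros [pre x] n. unfold code_SX. simpl.
    set (s1 := pre ++ [x]).
    assert (E1 : code_sit s1 = (2 * code_sit pre + b2n x)%nat) by apply cs_app.
    pose proof (HP s1 n) as HP1. pose proof (HM s1 n) as HM1. pose proof (HD s1 n) as HD1.
    rewrite E1 in HP1, HM1, HD1.
    pose proof (HP pre n) as HP2. pose proof (HM pre n) as HM2. pose proof (HD pre n) as HD2.
    set (E := pow2 n).
    set (p1 := pf s1 n). set (m1 := mf s1 n). set (D1 := S (df s1 n)).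
    set (p2 := pf pre n). set (m2 := mf pre n). set (D2 := S (df pre n)).
    set (A := (p1 * E + D1 * E - (m1 * E + 3 * D1))%nat).
    set (X2 := (p2 * E + 3 * D2 + D2 * E)%nat). set (Y2 := (m2 * E)%nat).
    set (Bn := (X2 - Y2)%nat).
    assert (HE : INR E = 2 ^ n) by apply pow2_INR.
    assert (HE0 : 0 < INR E) by (rewrite HE; apply pow_lt; lra).
    assert (HD10 : 0 < INR D1) by (apply lt_0_INR; unfold D1; lia).
    assert (HD20 : 0 < INR D2) by (apply lt_0_INR; unfold D2; lia).
    assert (Hlo : Rmax (lo_ s1 n) 0 = INR A / (INR D1 * INR E)).
    { unfold A. rewrite INR_sub_max by nra. f_equal. unfold lo_. rewrite HQ. unfold Qval.
      fold p1 m1. replace (INR (S (df s1 n))) with (INR D1) by reflexivity.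
      rewrite !plus_INR, !mult_INR, <- HE. replace (INR 3) with 3 by (simpl; ring). field. split; lra. }
    assert (Hupv : up_ pre n = (INR X2 - INR Y2) / (INR D2 * INR E)).
    { unfold up_, X2, Y2. rewrite HQ. unfold Qval. fold p2 m2.
      replace (INR (S (df pre n))) with (INR D2) by reflexivity.
      rewrite !plus_INR, !mult_INR, <- HE. replace (INR 3) with 3 by (simpl; ring). field. split; lra. }
    assert (HXY : INR Y2 < INR X2).
    { pose proof (Hup1 pre n) as Hu. pose proof (T0 pre) as Tp. rewrite Hupv in Hu.
      assert (Hq0 : 0 < (INR X2 - INR Y2) / (INR D2 * INR E)) by lra.
      apply Rlt_0_minus. apply (Rmult_lt_reg_r (/ (INR D2 * INR E))).
      apply Rinv_0_lt_compat; nra. rewrite Rmult_0_l. exact Hq0. }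
    apply INR_lt in HXY.
    assert (HBn : INR Bn = INR X2 - INR Y2) by (unfold Bn; apply minus_INR; lia).
    exists (A * D2)%nat, 0%nat, (pred (D1 * Bn))%nat.
    split; [|split; [|split]].
    + ev_auto; first [exact HP1 | exact HM1 | exact HD1 | exact HP2 | exact HM2 | exact HD2 | idtac].
    + constructor.
    + ev_auto; first [exact HP1 | exact HM1 | exact HD1 | exact HP2 | exact HM2 | exact HD2 | idtac].
    + unfold qD. simpl fst; simpl snd. fold s1. rewrite Hlo, Hupv, Qval_frac.
      replace (S (pred (D1 * Bn))) with (D1 * Bn)%nat by (unfold D1; nia).
      rewrite !mult_INR, HBn. field. split; [|split]; try lra. 
      apply Rgt_not_eq. apply Rlt_gt. apply Rlt_0_minus. apply lt_INR. auto.
  - intros [pre x] n. unfold qD. simpl fst; simpl snd.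
    assert (H1 : 1 <= up_ pre (S n)) by (pose proof (Hup1 pre (S n)); specialize (T0 pre); lra).
    pose proof (Hupm pre n).
    assert (Ha : 0 <= Rmax (lo_ (pre ++ [x]) n) 0) by apply Rmax_r.
    assert (Ha' : Rmax (lo_ (pre ++ [x]) n) 0 <= Rmax (lo_ (pre ++ [x]) (S n)) 0) by (apply Rle_max_compat_r; auto).
    unfold Rdiv. apply Rmult_le_compat; auto. left; apply Rinv_0_lt_compat; lra.
    apply Rinv_le_contravar; lra.
  - intros [pre x]. unfold qD. simpl fst; simpl snd.
    assert (ED : D pre x = Rmax (T (pre ++ [x]) + 1) 0 * / (T pre + 1)).
    { unfold D. rewrite Rmax_left. reflexivity. specialize (T0 (pre ++ [x])). lra. }
    change (Un_cv (fun n => Rmax (lo_ (pre ++ [x]) n) 0 / up_ pre n) (D pre x)).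
    rewrite ED. unfold Rdiv.
    apply CV_mult.
    + apply Un_cv_max0. apply Un_cv_plus_const. apply approx_cv.
      intros n. apply Hqa.
    + apply Un_cv_inv_ge1. apply Un_cv_plus_const. apply approx_cv. intros n; apply Hqa.
      specialize (T0 pre); lra. intros n. apply Hup1.
Qed.

Lemma C_S w I : C_random w I -> S_random w I.
Proof.
  intros HC [T [tau [Htsm [HTc [Htc [H0 [Hmono [Hunb Hls]]]]]]]]. apply HC.
  exists T. split; auto. split; auto.
  intros M N. destruct (Hunb (M + 1)) as [n0 Hn0].
  destruct (Hls 1 (max N n0) Rlt_0_1) as [n [Hn Hgt]]. exists n. split. lia.
  assert (Hm : forall a b, (a <= b)%nat -> tau a <= tau b).
  { intros a b Hab. induction Hab. lra. specialize (Hmono m). lra. }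
  specialize (Hm n0 n ltac:(lia)). lra.
Qed.

Lemma CH_wCH w I : CH_random w I -> wCH_random w I.
Proof. intros H Sel Hs _. apply H; auto. Qed.

Lemma fam (A B : path -> ivl -> Prop) w : (forall I, A w I -> B w I) -> subsetR (I_R B w) (I_R A w).
Proof. intros H x [Hx Hall]. split; auto. Qed.

Theorem corollary1 : forall w : path,
  subsetR (I_R wCH_random w) (I_R CH_random w) /\
  subsetR (I_R CH_random w) (I_R C_random w) /\
  subsetR (I_R wCH_random w) (I_R S_random w) /\
  subsetR (I_R S_random w) (I_R C_random w) /\
  subsetR (I_R C_random w) (I_R wML_random w) /\
  subsetR (I_R wML_random w) (I_R ML_random w).
Proof.
  intros w. split; [|split; [|split; [|split; [|split]]]]; apply fam; intros I.
  - apply CH_wCH.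
  - apply C_CH.
  - apply S_wCH.
  - apply C_S.
  - apply wML_C.
  - apply ML_wML.
Qed.
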